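(* Fix a plane tree $T$ with $n\ge 1$ edges and let $F(T)$ be the forest obtained by deleting its root (the ordered list of subtrees rooted at the children of the root). The map sending a labeling $\ell$ such that $(T,\ell)$ is a sticky tree to the function $v\mapsto c(v)-1$ on the nodes of $F(T)$, where $c$ is the certificate-counting function of $(T,\ell)$, is a bijection from the set of such labelings onto the set of closed flows on $F(T)$.
   Context: Sticky trees: a plane tree is a rooted tree in which the children of every node are linearly ordered (left to right). The root has depth $0$, a child of a node of depth $d$ has depth $d+1$. The prefix order is: the root, followed by the prefix order of the subtree of its leftmost child, then of its second child, and so on. $S_u$ denotes the subtree rooted at $u$. A sticky tree is a plane tree $S$ with node set $V$ and a labeling $\ell:V\to\mathbb{N}$ such that: (1) every node $u$ of depth $d$ has $0\le\ell(u)\le d$; (2) every node $u$ of depth $d>0$ has some $v\in S_u$ (possibly $v=u$) with $\ell(v)<d$; (3) for every node $u$ of depth $d$, if some $v\in S_u$ has $\ell(v)=d$, then every node of $S_u$ (including $u$) preceding $v$ in prefix order has label at least $d$. The certificate of a non-root node $u$ of depth $d$ is the first node, in prefix order, of $S_u$ whose label is $<d$. The certificate-counting function $c:V\to\mathbb{N}$ assigns to each node $w$ the number of non-root nodes whose certificate is $w$. Flows: a forest is an ordered list $(A_1,\dots,A_k)$ of plane trees. A flow on a forest $F$ is an integer-valued function $f$ on its nodes with $f(v)\ge -1$ for every node $v$ and such that the outgoing rate of every node is nonnegative, where the outgoing rate of $v$ is $\sum_{w} f(w)$ over all nodes $w$ of the subtree of $F$ rooted at $v$ (including $v$). A flow is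 closed if the outgoing rate of the root of every $A_i$ is $0$. *)

(* Defs.v *)
From HB Require Import structures.
From mathcomp Require Import all_boot all_order all_algebra.
Set Implicit Arguments. Unset Strict Implicit. Unset Printing Implicit Defensive.
Import Order.TTheory GRing.Theory Num.Theory.

Inductive ptree := Node of seq ptree.

Definition children (t : ptree) : seq ptree := let: Node ts := t in ts.

Fixpoint ptsize (t : ptree) : nat :=
  let: Node ts := t in (sumn (map ptsize ts)).+1.

(* Nodes are identified with their position in prefix order.  [pre d t]
   lists, in prefix order, (depth, size of subtree) of every node of t,
   the root of t having depth d. *)
Fixpoint pre (d : nat) (t : ptree) : seq (nat * nat) :=
  let: Node ts := t in (d, ptsize t) :: flatten (map (pre d.+1) ts).

Definition tnodes (T : ptree) := pre 0 T.
Definition nnodes (T : ptree) := size (tnodes T).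
Definition depth (T : ptree) (u : nat) := (nth (0, 0) (tnodes T) u).1.
Definition sub (T : ptree) (u : nat) := (nth (0, 0) (tnodes T) u).2.
(* v is a node of S_u (subtrees are contiguous intervals in prefix order) *)
Definition in_sub (T : ptree) (u v : nat) : bool := (u <= v) && (v < u + sub T u).

Definition is_sticky (T : ptree) (l : nat -> nat) : Prop :=
  (forall u, u < nnodes T -> l u <= depth T u) /\
  (forall u, u < nnodes T -> 0 < depth T u ->
     exists v, in_sub T u v /\ l v < depth T u) /\
  (forall u v, u < nnodes T -> in_sub T u v -> l v = depth T u ->
     forall w, in_sub T u w -> w < v -> depth T u <= l w).

Definition certificate (T : ptree) (l : nat -> nat) (u : nat) : nat :=
  u + find (fun k => l (u + k) < depth T u) (iota 0 (sub T u)).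

Definition cert_count (T : ptree) (l : nat -> nat) (w : nat) : nat :=
  count (fun u => certificate T l u == w) (iota 1 (nnodes T).-1).

Definition fnodes (F : seq ptree) := flatten (map (pre 0) F).
Definition fnnodes (F : seq ptree) := size (fnodes F).
Definition fdepth (F : seq ptree) (v : nat) := (nth (0, 0) (fnodes F) v).1.
Definition fsub (F : seq ptree) (v : nat) := (nth (0, 0) (fnodes F) v).2.

Definition outrate (F : seq ptree) (f : nat -> int) (v : nat) : int :=
  (\sum_(v <= w < v + fsub F v) f w)%R.

Definition is_flow (F : seq ptree) (f : nat -> int) : Prop :=
  forall v, v < fnnodes F -> ((-1 <= f v)%R /\ (0 <= outrate F f v)%R).

Definition is_closed_flow (F : seq ptree) (f : nat -> int) : Prop :=
  is_flow F f /\
  (forall v, v < fnnodes F -> fdepth F v = 0 -> outrate F f v = 0%R).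

(* The forest F(T) = children T; its j-th node (prefix order) is the
   (j+1)-th node of T.  The map l |-> (v |-> c(v) - 1) on nodes of F(T). *)
Definition sticky_to_flow (T : ptree) (l : nat -> nat) : nat -> int :=
  fun j => ((cert_count T l j.+1)%:Z - 1)%R.

(* Main.v *)
Require Import Defs.
From mathcomp Require Import all_boot all_order all_algebra.
From mathcomp Require Import zify.
Set Implicit Arguments. Unset Strict Implicit. Unset Printing Implicit Defensive.

Definition NL := seq (nat * nat).
Definition dp (N : NL) i := (nth (0,0) N i).1.
Definition sz (N : NL) i := (nth (0,0) N i).2.
Definition insN (N : NL) u v := (u <= v) && (v < u + sz N u).
Definition condsAt (N : NL) (l : nat -> nat) u :=
  l u <= dp N u /\
  (0 < dp N u -> exists v, insN N u v /\ l v < dp N u) /\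
  (forall v, insN N u v -> l v = dp N u ->
     forall w, insN N u w -> w < v -> dp N u <= l w).
Definition stickyN (N : NL) l := forall u, u < size N -> condsAt N l u.
Definition certN (N : NL) (l : nat -> nat) u :=
  u + find (fun k => l (u + k) < dp N u) (iota 0 (sz N u)).
Definition cntN (N : NL) l w := count (fun u => certN N l u == w) (iota 0 (size N)).
Definition sh (l : nat -> nat) a := fun i => l (a + i).
Definition closedN (N : NL) := forall i, i < size N ->
  0 < sz N i /\ i + sz N i <= size N /\
  forall u, i <= u < i + sz N i -> u + sz N u <= i + sz N i.
Definition deepN D (N : NL) := forall i, i < size N -> D <= dp N i.

Fixpoint fpre d (ts : seq ptree) : NL :=
  match ts with [::] => [::] | t :: ts' => pre d t ++ fpre d ts' end.

Lemma fpreE d ts : fpre d ts = flatten (map (pre d) ts).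
Proof. by elim: ts => //= t ts ->. Qed.

Lemma preE d ts : pre d (Node ts) = (d, ptsize (Node ts)) :: fpre d.+1 ts.
Proof. by rewrite /= fpreE. Qed.

Lemma ptree_ind2 (P : ptree -> Prop) (Q : seq ptree -> Prop) :
  Q [::] -> (forall t ts, P t -> Q ts -> Q (t :: ts)) ->
  (forall ts, Q ts -> P (Node ts)) -> (forall t, P t) /\ (forall ts, Q ts).
Proof.
move=> H0 HC HN.
have HP : forall t, P t.
  fix F 1 => -[ts]; apply: HN.
  elim: ts => [|t ts IH]; [exact: H0| exact: HC (F t) IH].
split=> //; elim=> [|t ts IH]; [exact: H0 | exact: HC].
Qed.

Lemma nth_catr (A B : NL) i : nth (0,0) (A ++ B) (size A + i) = nth (0,0) B i.
Proof. by rewrite nth_cat ltnNge leq_addr /= addKn. Qed.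
Lemma nth_catl (A B : NL) i : i < size A -> nth (0,0) (A ++ B) i = nth (0,0) A i.
Proof. by move=> h; rewrite nth_cat h. Qed.

Lemma dp_catr A B i : dp (A ++ B) (size A + i) = dp B i.
Proof. by rewrite /dp nth_catr. Qed.
Lemma sz_catr A B i : sz (A ++ B) (size A + i) = sz B i.
Proof. by rewrite /sz nth_catr. Qed.
Lemma dp_catl A B i : i < size A -> dp (A ++ B) i = dp A i.
Proof. by move=> h; rewrite /dp nth_catl. Qed.
Lemma sz_catl A B i : i < size A -> sz (A ++ B) i = sz A i.
Proof. by move=> h; rewrite /sz nth_catl. Qed.

Lemma cert_catr A B l u :
  certN (A ++ B) l (size A + u) = size A + certN B (sh l (size A)) u.
Proof.
rewrite /certN dp_catr sz_catr -addnA; congr (_ + (_ + _)).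
by apply: eq_find => k; rewrite /sh addnA.
Qed.
Lemma cert_catl A B l u : u < size A -> certN (A ++ B) l u = certN A l u.
Proof. by move=> h; rewrite /certN dp_catl // sz_catl. Qed.

Lemma insN_catl A B u v : u < size A -> insN (A ++ B) u v = insN A u v.
Proof. by move=> h; rewrite /insN sz_catl. Qed.
Lemma insN_catr A B u v :
  insN (A ++ B) (size A + u) v =
  (size A <= v) && insN B u (v - size A).
Proof.
rewrite /insN sz_catr.
case: (leqP (size A) v) => h /=; last by apply/negbTE; lia.
apply/andP/andP => -[h1 h2]; split; lia.
Qed.

Lemma conds_catl A B l u : u < size A -> condsAt (A ++ B) l u <-> condsAt A l u.
Proof.
move=> h; rewrite /condsAt dp_catl //.
split=> -[c1 [c2 c3]]; split=> //; split.
- by move=> /c2 [v]; rewrite insN_catl // => ?; exists v.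
- by move=> v; rewrite -(insN_catl B) // => hv e w; rewrite -(insN_catl B) //; apply: c3.
- by move=> /c2 [v]; rewrite -(insN_catl B) // => ?; exists v.
- by move=> v; rewrite (insN_catl B) // => hv e w; rewrite (insN_catl B) //; apply: c3.
Qed.

Lemma conds_catr A B l u :
  condsAt (A ++ B) l (size A + u) <-> condsAt B (sh l (size A)) u.
Proof.
rewrite /condsAt dp_catr /sh.
split=> -[c1 [c2 c3]]; split=> //; split.
- move=> /c2 [v]; rewrite insN_catr => -[/andP[h1 h2] h3]; exists (v - size A).
  by rewrite subnKC.
- move=> v hv e w hw wv.
  have := c3 (size A + v); rewrite insN_catr leq_addr addKn => /(_ hv e (size A + w)).
  by rewrite insN_catr leq_addr addKn ltn_add2l; apply.
- move=> /c2 [v [hv hl]]; exists (size A + v); rewrite insN_catr leq_addr addKn.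
  by split.
- move=> v; rewrite insN_catr => /andP[h1 h2] e w; rewrite insN_catr => /andP[h3 h4] wv.
  have := c3 (v - size A) h2; rewrite subnKC // => /(_ e (w - size A) h4).
  rewrite subnKC //; apply; lia.
Qed.

Lemma sticky_cat A B l :
  stickyN (A ++ B) l <-> stickyN A l /\ stickyN B (sh l (size A)).
Proof.
rewrite /stickyN size_cat; split.
- move=> H; split.
  + by move=> u hu; rewrite -(conds_catl B) //; apply: H; lia.
  + by move=> u hu; rewrite -conds_catr; apply: H; lia.
- move=> [H1 H2] u hu; case: (ltnP u (size A)) => h.
  + by rewrite conds_catl //; apply: H1.
  + by rewrite -(subnKC h) conds_catr; apply: H2; lia.
Qed.
Lemma closed_cat A B : closedN A -> closedN B -> closedN (A ++ B).
Proof.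
move=> hA hB i; rewrite size_cat => hi; case: (ltnP i (size A)) => h.
- rewrite sz_catl //; have [h1 [h2 h3]] := hA i h; split=> //; split; first lia.
  move=> u hu; rewrite sz_catl; first by apply: h3.
  lia.
- rewrite -(subnKC h) sz_catr.
  have [h1 [h2 h3]] := hB (i - size A) ltac:(lia); split=> //; split; first lia.
  move=> u hu; have -> : u = size A + (u - size A) by lia.
  rewrite sz_catr; have := h3 (u - size A) ltac:(lia); lia.
Qed.

Lemma closed_cons d B : closedN B -> closedN ((d, (size B).+1) :: B).
Proof.
move=> hB i /= hi; case: i hi => [|i] hi.
- rewrite /sz /=; split=> //; split=> // -[|u] hu //=.
  have := hB u ltac:(lia); rewrite /sz /=; lia.
- have := hB i ltac:(lia); rewrite /sz /= => -[h1 [h2 h3]]; split=> //; split; first lia.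
  move=> [|u] hu /=; first lia.
  have := h3 u ltac:(lia); lia.
Qed.

Lemma deep_cat D A B : deepN D A -> deepN D B -> deepN D (A ++ B).
Proof.
move=> hA hB i; rewrite size_cat => hi; case: (ltnP i (size A)) => h.
- by rewrite dp_catl //; apply: hA.
- by rewrite -(subnKC h) dp_catr; apply: hB; lia.
Qed.

Lemma deep_cons D B x : D <= x.1 -> deepN D.+1 B -> deepN D (x :: B).
Proof.
move=> hx hB [|i] //= hi; rewrite /dp /=; have := hB i hi; rewrite /dp; lia.
Qed.

Lemma struct_all :
  (forall t d, size (pre d t) = ptsize t /\ closedN (pre d t) /\ deepN d (pre d t)) /\
  (forall ts d, size (fpre d ts) = sumn (map ptsize ts) /\ closedN (fpre d ts)
                /\ deepN d (fpre d ts)).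
Proof.
apply: ptree_ind2.
- by move=> d; split=> //; split=> // i.
- move=> t ts Ht Hts d /=; have [s1 [c1 d1]] := Ht d; have [s2 [c2 d2]] := Hts d.
  rewrite size_cat s1 s2; split=> //; split; [exact: closed_cat | exact: deep_cat].
- move=> ts Hts d; rewrite preE; have [s2 [c2 d2]] := Hts d.+1.
  rewrite /= s2; split=> //; split.
  + by have := @closed_cons d _ c2; rewrite s2.
  + by apply: deep_cons.
Qed.

Lemma size_pre d t : size (pre d t) = ptsize t.
Proof. by have [H _] := struct_all; have [] := H t d. Qed.
Lemma closed_pre d t : closedN (pre d t).
Proof. by have [H _] := struct_all; have [_ []] := H t d. Qed.
Lemma deep_pre d t : deepN d (pre d t).
Proof. by have [H _] := struct_all; have [_ []] := H t d. Qed.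
Lemma size_fpre d ts : size (fpre d ts) = sumn (map ptsize ts).
Proof. by have [_ H] := struct_all; have [] := H ts d. Qed.
Lemma closed_fpre d ts : closedN (fpre d ts).
Proof. by have [_ H] := struct_all; have [_ []] := H ts d. Qed.
Lemma deep_fpre d ts : deepN d (fpre d ts).
Proof. by have [_ H] := struct_all; have [_ []] := H ts d. Qed.

Lemma preE2 d ts : pre d (Node ts) = (d, (size (fpre d.+1 ts)).+1) :: fpre d.+1 ts.
Proof. by rewrite preE size_fpre. Qed.
Lemma cert_ge N l u : u <= certN N l u.
Proof. exact: leq_addr. Qed.

Lemma cert_spec N l u : u < size N -> condsAt N l u -> 0 < dp N u ->
  [/\ u <= certN N l u, certN N l u < u + sz N u, l (certN N l u) < dp N u &
     forall w, u <= w < certN N l u -> dp N u <= l w].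
Proof.
move=> hu [_ [c2 _]] hd; have [v [/andP[h1 h2] h3]] := c2 hd.
set P := (fun k => l (u + k) < dp N u).
have hh : has P (iota 0 (sz N u)).
  apply/hasP; exists (v - u); first by rewrite mem_iota; lia.
  by rewrite /P subnKC.
have hf := hh; rewrite has_find size_iota in hf.
split.
- exact: cert_ge.
- by rewrite /certN ltn_add2l.
- by have := nth_find 0 hh; rewrite nth_iota // add0n.
- move=> w /andP[h4 h5].
  have h6 : w - u < find P (iota 0 (sz N u)) by move: h5; rewrite /certN /P; lia.
  have := before_find 0 h6.
  rewrite nth_iota; last lia.
  by rewrite /P add0n subnKC // => /negbT; rewrite -leqNgt.
Qed.

Lemma find_iota_eq (P : pred nat) n q : q < n -> P q -> (forall k, k < q -> ~~ P k) ->
  find P (iota 0 n) = q.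
Proof.
move=> hq hP hk.
have hh : has P (iota 0 n) by apply/hasP; exists q => //; rewrite mem_iota.
have hf := hh; rewrite has_find size_iota in hf.
case: (ltngtP (find P (iota 0 n)) q) => // h.
- by have := nth_find 0 hh; rewrite nth_iota // add0n => /(negP (hk _ h)).
- by have := before_find 0 h; rewrite nth_iota ?add0n ?hP; lia.
Qed.

Lemma cert_eq N l u q : u <= q < u + sz N u -> l q < dp N u ->
  (forall w, u <= w < q -> ~~ (l w < dp N u)) -> certN N l u = q.
Proof.
move=> /andP[h1 h2] h3 h4; rewrite /certN (@find_iota_eq _ _ (q - u)).
- lia.
- lia.
- by rewrite subnKC.
- move=> k hk; apply: h4; lia.
Qed.

Lemma sum_eq1 (a b c : nat) : \sum_(a <= w < b) (c == w : nat) = (a <= c < b).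
Proof.
elim: b => [|b IH]; first by rewrite big_geq // ltn0 andbF.
case: (leqP a b) => h.
2:{ rewrite big_geq //; suff -> : (a <= c < b.+1) = false by [].
    by apply/negbTE/negP => /andP[]; lia. }
rewrite big_nat_recr //= IH.
case: (eqVneq c b) => [->|hcb]; first by rewrite ltnn andbF leqnn h.
by rewrite addn0 ltnS [c <= b]leq_eqVlt (negbTE hcb).
Qed.

Lemma sum_count (c : nat -> nat) (s : seq nat) a b :
  \sum_(a <= w < b) count (fun u => c u == w) s = count (fun u => a <= c u < b) s.
Proof.
elim: s => [|x s IH] /=; first by rewrite big1.
by rewrite big_split /= IH sum_eq1.
Qed.

Lemma sum_cnt N l a b :
  \sum_(a <= w < b) cntN N l w = count (fun u => a <= certN N l u < b) (iota 0 (size N)).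
Proof. exact: sum_count. Qed.

Lemma count_range n i s : i + s <= n ->
  count (fun u => i <= u < i + s) (iota 0 n) = s.
Proof.
move=> h; rewrite -(subnKC h) iotaD iotaD !count_cat add0n.
rewrite (@eq_in_count _ _ pred0 (iota 0 i)); last first.
  move=> x; rewrite mem_iota /= add0n => hx; apply/negbTE/negP => /andP[h1 h2].
  move: hx h1; clear; lia.
rewrite (@eq_in_count _ _ predT (iota i s)); last first.
  move=> x; rewrite mem_iota /= => /andP[h1 h2]; by rewrite h1 h2.
rewrite (@eq_in_count _ _ pred0 (iota (i + s) _)); last first.
  move=> x; rewrite mem_iota /= => hx; apply/negbTE/negP => /andP[h1 h2].
  move: hx h2; clear; lia.
by rewrite !count_pred0 count_predT size_iota addn0.
Qed.

Lemma total_cnt N l : closedN N -> deepN 1 N -> stickyN N l ->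
  \sum_(0 <= w < size N) cntN N l w = size N.
Proof.
move=> hc hd hs; rewrite sum_cnt.
rewrite (@eq_in_count _ _ predT); first by rewrite count_predT size_iota.
move=> u; rewrite mem_iota add0n => hu /=.
have [h1 h2 _ _] := cert_spec hu (hs u hu) (hd u hu).
have [_ [h3 _]] := hc u hu; lia.
Qed.

Lemma sub_cnt N l i : closedN N -> deepN 1 N -> stickyN N l -> i < size N ->
  sz N i <= \sum_(i <= w < i + sz N i) cntN N l w.
Proof.
move=> hc hd hs hi; rewrite sum_cnt.
have [h0 [h1 h2]] := hc i hi.
rewrite -{1}(@count_range (size N) i (sz N i)) //.
apply: sub_count => u /= hu.
have hu' : u < size N by lia.
have [h3 h4 _ _] := cert_spec hu' (hs u hu') (hd u hu').
have := h2 u hu; lia.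
Qed.
Lemma cert_lt N l u : closedN N -> deepN 1 N -> stickyN N l -> u < size N ->
  certN N l u < size N.
Proof.
move=> hc hd hs hu; have [_ h _ _] := cert_spec hu (hs u hu) (hd u hu).
have [_ [h2 _]] := hc u hu; lia.
Qed.

Lemma count_split (A B : NL) (P : pred nat) :
  count P (iota 0 (size (A ++ B))) =
  count P (iota 0 (size A)) + count (fun u => P (size A + u)) (iota 0 (size B)).
Proof. by rewrite size_cat iotaD count_cat add0n -[size A]addn0 iotaDl count_map addn0. Qed.

Lemma cnt_catl A B l w : closedN A -> deepN 1 A -> stickyN A l -> w < size A ->
  cntN (A ++ B) l w = cntN A l w.
Proof.
move=> hc hd hs hw; rewrite /cntN count_split.
rewrite (@eq_in_count _ _ pred0 (iota 0 (size B))); last first.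
  move=> x _ /=; apply/negbTE; rewrite cert_catr; lia.
rewrite count_pred0 addn0; apply: eq_in_count => u; rewrite mem_iota => hu /=.
by rewrite cert_catl //; lia.
Qed.

Lemma cnt_catr A B l w : closedN A -> deepN 1 A -> stickyN A l ->
  cntN (A ++ B) l (size A + w) = cntN B (sh l (size A)) w.
Proof.
move=> hc hd hs; rewrite /cntN count_split.
rewrite (@eq_in_count _ _ pred0 (iota 0 (size A))); last first.
  move=> u; rewrite mem_iota => hu /=; apply/negbTE.
  rewrite cert_catl; last lia.
  have := @cert_lt A l u hc hd hs ltac:(lia); lia.
rewrite count_pred0 add0n; apply: eq_count => u /=.
by rewrite cert_catr eqn_add2l.
Qed.

Definition esceq D (l1 l2 : nat -> nat) n :=
  forall v, v < n -> l1 v = l2 v \/ (l1 v < D /\ l2 v < D).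

Lemma cert_inv N D l1 l2 u : closedN N -> deepN D N -> u < size N ->
  esceq D l1 l2 (size N) -> certN N l1 u = certN N l2 u.
Proof.
move=> hc hd hu he; rewrite /certN; congr (_ + _); apply: eq_in_find => k.
rewrite mem_iota add0n => hk /=.
have [_ [h2 _]] := hc u hu; have hh := hd u hu.
have hk' : u + k < size N by move: hk h2; clear; lia.
have [->|[h3 h4]] := he (u + k) hk' => //.
by rewrite (leq_trans h3 hh) (leq_trans h4 hh).
Qed.

Lemma cnt_inv N D l1 l2 w : closedN N -> deepN D N ->
  esceq D l1 l2 (size N) -> cntN N l1 w = cntN N l2 w.
Proof.
move=> hc hd he; apply: eq_in_count => u; rewrite mem_iota add0n => hu /=.
by rewrite (cert_inv hc hd hu he).
Qed.

Lemma sticky_inv N D l1 l2 : closedN N -> deepN D N -> esceq D l1 l2 (size N) ->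
  (forall v, v < size N -> l1 v <= dp N v) -> stickyN N l2 -> stickyN N l1.
Proof.
move=> hc hd he h1 hs u hu; have [_ [c2 c3]] := hs u hu.
have [_ [hcl hn]] := hc u hu; have hD := hd u hu.
split; first exact: h1.
split.
- move=> /c2 [v [hv hl]]; exists v; split=> //.
  move: hv => /andP[hv1 hv2].
  have [->|[h3 h4]] := he v ltac:(lia) => //; lia.
- move=> v hv e w hw wv; move: (hv) (hw) => /andP[hv1 hv2] /andP[hw1 hw2].
  have ev : l1 v = l2 v.
    have [//|[h3 h4]] := he v ltac:(lia); lia.
  have := c3 v hv ltac:(lia) w hw wv.
  have [->|[h3 h4]] := he w ltac:(lia) => //; lia.
Qed.
Lemma deep_weak D D' N : D' <= D -> deepN D N -> deepN D' N.
Proof. by move=> h hd i hi; have := hd i hi; lia. Qed.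

Section Cons.
Variables (D : nat) (B : NL).
Let N := (D, (size B).+1) :: B.

Lemma cert_consS l u : certN N l u.+1 = (certN B (sh l 1) u).+1.
Proof. by have := @cert_catr [:: (D, (size B).+1)] B l u. Qed.

Lemma cnt_cons0 l : cntN N l 0 = (certN N l 0 == 0).
Proof.
rewrite /cntN (count_split [:: (D, (size B).+1)] B) /=.
rewrite (@eq_in_count _ _ pred0); first by rewrite count_pred0 !addn0.
by move=> u _ /=; have := @cert_catr [:: (D, (size B).+1)] B l u => /= ->.
Qed.

Lemma cnt_consS l j : cntN N l j.+1 = (certN N l 0 == j.+1) + cntN B (sh l 1) j.
Proof.
rewrite /cntN (count_split [:: (D, (size B).+1)] B) /=; rewrite addn0; congr (_ + _).
all: try (apply: eq_count => u /=; by have := @cert_catr [:: (D, (size B).+1)] B l u => /= ->).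
Qed.

Lemma sticky_cons l : stickyN N l <-> condsAt N l 0 /\ stickyN B (sh l 1).
Proof.
have := @sticky_cat [:: (D, (size B).+1)] B l => /= ->.
split=> -[h1 h2]; split=> //.
- by have := h1 0 isT; rewrite (@conds_catl [:: (D, (size B).+1)] B).
- by move=> [|u] // _; rewrite -(@conds_catl [:: (D, (size B).+1)] B).
Qed.

Lemma closed_consN : closedN B -> closedN N.
Proof. exact: closed_cons. Qed.

Lemma dp_cons0 : dp N 0 = D. Proof. by []. Qed.
Lemma sz_cons0 : sz N 0 = (size B).+1. Proof. by []. Qed.
Lemma size_cons : size N = (size B).+1. Proof. by []. Qed.
Lemma insN_cons0 v : insN N 0 v = (v < (size B).+1). Proof. by []. Qed.
End Cons.
Definition escs D (N : NL) l (m : nat -> nat) :=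
  forall i, i < size N -> 0 < m i -> l i < D.

Definition INJ D (N : NL) := forall l1 l2 m1 m2,
  stickyN N l1 -> stickyN N l2 -> escs D N l1 m1 -> escs D N l2 m2 ->
  (forall i, i < size N -> cntN N l1 i + m1 i = cntN N l2 i + m2 i) ->
  forall i, i < size N -> m1 i = m2 i /\ (l1 i = l2 i \/ (l1 i < D /\ l2 i < D)).

Lemma inj_nil D : INJ D [::].
Proof. by move=> *. Qed.

Lemma inj_cat D A B : 0 < D -> closedN A -> deepN D A -> INJ D A -> INJ D B ->
  INJ D (A ++ B).
Proof.
move=> hD hc hd IA IB l1 l2 m1 m2 /sticky_cat[sA1 sB1] /sticky_cat[sA2 sB2] e1 e2 hh i.
have hd1 : deepN 1 A by apply: deep_weak hd.
rewrite size_cat => hi; case: (ltnP i (size A)) => hiA.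
- apply: IA => //.
  + by move=> k hk; apply: e1; rewrite size_cat; lia.
  + by move=> k hk; apply: e2; rewrite size_cat; lia.
  + move=> k hk; rewrite -!(@cnt_catl A B) //; apply: hh; rewrite size_cat; lia.
- rewrite -(subnKC hiA).
  apply: (IB (sh l1 (size A)) (sh l2 (size A)) (sh m1 (size A)) (sh m2 (size A))) => //.
  + by move=> k hk; apply: e1; rewrite size_cat; lia.
  + by move=> k hk; apply: e2; rewrite size_cat; lia.
  + move=> k hk; rewrite /sh -!(@cnt_catr A B) //; apply: hh; rewrite size_cat; lia.
  + lia.
Qed.

Lemma inj_cons D B : 0 < D -> closedN B -> deepN D.+1 B -> INJ D.+1 B ->
  INJ D ((D, (size B).+1) :: B).
Proof.
move=> hD hcB hdB IB.
set N := (D, (size B).+1) :: B.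
have hcN : closedN N by apply: closed_cons.
move=> l1 l2 m1 m2 /sticky_cons[r1 sB1] /sticky_cons[r2 sB2] e1 e2 hh.
have [_ q1lt q1l q1min] := cert_spec (isT : 0 < size N) r1 hD.
have [_ q2lt q2l q2min] := cert_spec (isT : 0 < size N) r2 hD.
rewrite sz_cons0 add0n dp_cons0 in q1lt q1l q1min q2lt q2l q2min.
set q1 := certN N l1 0 in q1lt q1l q1min hh.
set q2 := certN N l2 0 in q2lt q2l q2min hh.
have IH := IB (sh l1 1) (sh l2 1) (fun j => m1 j.+1 + (q1 == j.+1))
   (fun j => m2 j.+1 + (q2 == j.+1)) sB1 sB2.
have {IH} IH : forall j, j < size B ->
   m1 j.+1 + (q1 == j.+1) = m2 j.+1 + (q2 == j.+1) /\
   (sh l1 1 j = sh l2 1 j \/ sh l1 1 j < D.+1 /\ sh l2 1 j < D.+1).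
  apply: IH.
  - move=> j hj /=; rewrite /sh add1n; case: (eqVneq q1 j.+1) => [e|_]; first by rewrite -e => _; move: q1l; clear; lia.
    by rewrite addn0 => hm; have := e1 j.+1 hj hm; clear; lia.
  - move=> j hj /=; rewrite /sh add1n; case: (eqVneq q2 j.+1) => [e|_]; first by rewrite -e => _; move: q2l; clear; lia.
    by rewrite addn0 => hm; have := e2 j.+1 hj hm; clear; lia.
  - move=> j hj; have := hh j.+1 hj; rewrite !cnt_consS -/q1 -/q2; lia.
have HM : forall i, i < size N -> m1 i + (q1 == i) = m2 i + (q2 == i).
  move=> [|j] hj.
  - have := hh 0 isT; rewrite !cnt_cons0 -/q1 -/q2 (eq_sym q1) (eq_sym q2); lia.
  - by have [] := IH j hj.
have key : forall l m q, (forall w, 0 <= w < q -> D <= l w) -> escs D N l m ->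
    forall i, i < size N -> 0 < m i + (q == i) -> q <= i.
  move=> l m q hmin he i hi; case: (eqVneq q i) => [->//|hqi].
  rewrite addn0 => hm; have := he i hi hm; case: (ltnP i q) => // hiq.
  by have := hmin i ltac:(lia); lia.
have eq12 : q1 = q2.
  apply/eqP; rewrite eqn_leq; apply/andP; split.
  - apply: (key l1 m1) => //; rewrite HM //; by rewrite eqxx; lia.
  - apply: (key l2 m2) => //; rewrite -HM //; by rewrite eqxx; lia.
move=> i hi; split.
  have := HM i hi; rewrite eq12; lia.
have [c11 _] := r1; have [c21 _] := r2; rewrite dp_cons0 in c11 c21.
case: i hi => [|j] hj.
- case: (posnP q1) => hq.
  + right; split; [by rewrite -hq | by rewrite -hq eq12].
  + left; have := q1min 0 ltac:(lia); have := q2min 0 ltac:(lia); lia.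
- have [_ [|]] := IH j hj; rewrite /sh /=; first by left.
  move=> [h1 h2].
  have lab : forall l, condsAt N l 0 -> forall q, q < size N -> l q < D ->
      (forall w, 0 <= w < q -> D <= l w) -> l j.+1 < D.+1 ->
      (q <= j.+1 -> l j.+1 < D) /\ (j.+1 < q -> l j.+1 = D).
    move=> l [_ [_ c3]] q hq hlq hmin hl; split.
    + move=> hqj; case: (ltnP (l j.+1) D) => // hlD.
      have hq' : q < j.+1.
        rewrite leq_eqVlt in hqj; case/orP: hqj => [/eqP e|//].
        by rewrite -e in hlD; move: hlq hlD; clear; lia.
      have i1 : insN N 0 j.+1 by rewrite insN_cons0 ltnS.
      have i2 : insN N 0 q by rewrite insN_cons0.
      have e : l j.+1 = dp N 0 by rewrite dp_cons0; move: hl hlD; clear; lia.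
      have := c3 j.+1 i1 e q i2 hq'; rewrite dp_cons0; move: hlq; clear; lia.
    + move=> hjq; have hw : 0 <= j.+1 < q by [].
      by have := hmin j.+1 hw; move: hl; clear; lia.
  have [a1 b1] := lab l1 r1 q1 q1lt q1l q1min h1.
  have [a2 b2] := lab l2 r2 q2 q2lt q2l q2min h2.
  rewrite -eq12 in a2 b2.
  case: (ltnP j.+1 q1) => hq.
  + by left; rewrite b1 // b2.
  + by right; split; [apply: a1 | apply: a2].
Qed.
Definition SURJ D (N : NL) := forall h : nat -> nat,
  (forall i, i < size N -> sz N i <= \sum_(i <= w < i + sz N i) h w) ->
  exists l m, stickyN N l /\ escs D N l m /\
     forall i, i < size N -> h i = cntN N l i + m i.

Lemma sum_shift a i s (h : nat -> nat) :
  \sum_(a + i <= w < a + i + s) h w = \sum_(i <= w < i + s) h (a + w).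
Proof.
rewrite (addnC a i) big_addn.
have -> : i + a + s - a = i + s by clear; lia.
by apply: eq_bigr => w _; rewrite addnC.
Qed.

Lemma deep0 N : deepN 0 N.
Proof. by move=> i _. Qed.

Lemma surj_nil D : SURJ D [::].
Proof. by move=> h _; exists (fun _ => 0), (fun _ => 0). Qed.

Lemma surj_cat D A B : 0 < D -> closedN A -> closedN B -> deepN D A ->
  SURJ D A -> SURJ D B -> SURJ D (A ++ B).
Proof.
move=> hD hcA hcB hdA SA SB h hf.
have hdA1 : deepN 1 A by apply: deep_weak hdA.
have hfA : forall i, i < size A -> sz A i <= \sum_(i <= w < i + sz A i) h w.
  move=> i hi; have := hf i; rewrite size_cat sz_catl //; apply; move: hi; clear; lia.
have hfB : forall i, i < size B ->
    sz B i <= \sum_(i <= w < i + sz B i) (sh h (size A)) w.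
  move=> i hi; have := hf (size A + i); rewrite size_cat sz_catr sum_shift; apply.
  move: hi; clear; lia.
have [lA [mA [sA [eA cA]]]] := SA h hfA.
have [lB [mB [sB [eB cB]]]] := SB (sh h (size A)) hfB.
pose l i := if i < size A then lA i else lB (i - size A).
pose m i := if i < size A then mA i else mB (i - size A).
exists l, m.
have eqA : esceq 0 l lA (size A) by move=> v hv; left; rewrite /l hv.
have eqB : esceq 0 (sh l (size A)) lB (size B).
  by move=> v hv; left; rewrite /l /sh ltnNge leq_addr /= addKn.
have sA' : stickyN A l.
  have hl1 : forall v, v < size A -> l v <= dp A v.
    by move=> v hv; rewrite /l hv; have [] := sA v hv.
  exact: (sticky_inv hcA (@deep0 A) eqA hl1 sA).
have sB' : stickyN B (sh l (size A)).
  have hl1 : forall v, v < size B -> sh l (size A) v <= dp B v.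
    by move=> v hv; rewrite /l /sh ltnNge leq_addr /= addKn; have [] := sB v hv.
  exact: (sticky_inv hcB (@deep0 B) eqB hl1 sB).
split; first by apply/sticky_cat.
split.
- move=> i; rewrite size_cat => hi; rewrite /m /l; case: (ltnP i (size A)) => hiA.
  + exact: eA.
  + by apply: eB; move: hi hiA; clear; lia.
- move=> i; rewrite size_cat => hi; case: (ltnP i (size A)) => hiA.
  + rewrite cnt_catl // /m hiA cA // (cnt_inv _ hcA (@deep0 A) eqA) //.
  + rewrite -(subnKC hiA) cnt_catr // /m ltnNge leq_addr /= addKn.
    rewrite (cnt_inv _ hcB (@deep0 B) eqB) -cB //; move: hi hiA; clear; lia.
Qed.
Lemma sum_pos_ex n (F : nat -> nat) : 0 < \sum_(0 <= w < n) F w ->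
  exists2 w, w < n & 0 < F w.
Proof.
elim: n => [|n IH]; first by rewrite big_geq.
rewrite big_nat_recr //=; case: (posnP (F n)) => [->|hF].
- by rewrite addn0 => /IH [w hw hF]; exists w => //; apply: ltnW.
- by move=> _; exists n.
Qed.

Lemma surj_cons D B : 0 < D -> closedN B -> deepN D.+1 B -> SURJ D.+1 B ->
  SURJ D ((D, (size B).+1) :: B).
Proof.
move=> hD hcB hdB SB h hf.
set N := (D, (size B).+1) :: B.
have hcN : closedN N by apply: closed_cons.
have hfB : forall j, j < size B -> sz B j <= \sum_(j <= w < j + sz B j) (sh h 1) w.
  move=> j hj; rewrite /sh -sum_shift; exact: (hf j.+1 hj).
have [l' [m' [sB [eB cB]]]] := SB (sh h 1) hfB.
have hdB1 : deepN 1 B by apply: deep_weak hdB.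
have tot : \sum_(0 <= w < size B) h w.+1 = size B + \sum_(0 <= w < size B) m' w.
  have tc := total_cnt hcB hdB1 sB.
  transitivity (\sum_(0 <= w < size B) (cntN B l' w + m' w)); last first.
    by rewrite big_split /= tc.
  apply: eq_big_nat => w hw.
  by have := cB w ltac:(move: hw; clear; lia); rewrite /sh add1n.
have h0 := hf 0 isT; rewrite sz_cons0 add0n big_nat_recl // tot in h0.
pose M i := if i is j.+1 then m' j else h 0.
have exM : has (fun i => 0 < M i) (iota 0 (size B).+1).
  apply/hasP; case: (posnP (h 0)) => [h00|hpos]; last by exists 0.
  rewrite h00 add0n in h0.
  have [w hw hm] : exists2 w, w < size B & 0 < m' w.
    by apply: sum_pos_ex; move: h0; clear; lia.
  by exists w.+1; rewrite // mem_iota.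
set q := find (fun i => 0 < M i) (iota 0 (size B).+1).
have hq : q < (size B).+1 by move: exM; rewrite has_find size_iota.
have Mq : 0 < M q by have := nth_find 0 exM; rewrite nth_iota // add0n.
have Mlt : forall i, i < q -> M i = 0.
  move=> i hi; have := before_find 0 hi; rewrite nth_iota; last first.
    by move: hi hq; clear; lia.
  by rewrite add0n => /negbT; rewrite -leqNgt leqn0 => /eqP.
pose l i := if i is j.+1 then (if l' j < D.+1 then (if j.+1 < q then D else D.-1)
             else l' j) else (if q == 0 then D.-1 else D).
pose m i := M i - (i == q).
have Lq : l q < D.
  rewrite /l; case E : (q) => [|j] /=; first by move: hD; clear; lia.
  rewrite E in Mq hq.
  rewrite (eB j hq Mq) ltnn; move: hD; clear; lia.
have Lbelow : forall i, i < q -> D <= l i.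
  move=> [|j] hi /=; first by rewrite (_ : q == 0 = false) //; move: hi; clear; lia.
  case: (ltnP (l' j) D.+1) => hl; first by rewrite hi.
  by move: hl; clear; lia.
have Leq : forall v, l v = D -> v < q.
  move=> [|j] /=.
  - case: (eqVneq q 0) => [_|]; first by move: hD; clear; lia.
    by rewrite lt0n.
  - case: (ltnP (l' j) D.+1) => hl; last by move: hl; clear; lia.
    by case: ifP => // _; move: hD; clear; lia.
have cert0 : certN N l 0 = q.
  apply: cert_eq; rewrite ?sz_cons0 ?dp_cons0 //.
  move=> w /andP[_ hw]; rewrite -leqNgt; exact: Lbelow.
have shl : esceq D.+1 (sh l 1) l' (size B).
  move=> v hv; rewrite /sh /l add1n.
  case: (ltnP (l' v) D.+1) => hl; last by left.
  right; split=> //; case: ifP => _; move: hD; clear; lia.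
have c1 : forall v, v < size B -> sh l 1 v <= dp B v.
  move=> v hv; have := hdB v hv; rewrite /sh /l add1n.
  case: (ltnP (l' v) D.+1) => hl.
  - by case: ifP => _; clear; lia.
  - by have [] := sB v hv.
have sB' : stickyN B (sh l 1) := sticky_inv hcB hdB shl c1 sB.
exists l, m; split.
  apply/sticky_cons; split=> //; split.
    by rewrite dp_cons0 /=; case: ifP => _; clear; lia.
  split.
    by move=> _; exists q; rewrite insN_cons0 dp_cons0.
  move=> v hv; rewrite dp_cons0 => /Leq hvq w hw hwv; apply: Lbelow.
  by move: hvq hwv; clear; lia.
split.
- move=> i hi hm.
  have hMi : 0 < M i by move: hm; rewrite /m; clear; lia.
  have hqi : q <= i.
    by case: (ltnP i q) => // /Mlt; move: hMi; clear; lia.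
  case: (eqVneq i q) => [->|hne]; first exact: Lq.
  case: i hi hm hMi hqi hne => [|j] hi hm hMi hqi hne.
    by move: hqi hne; clear; lia.
  rewrite /= (eB j hi hMi) ifF //; first by move: hD; clear; lia.
  by apply/negbTE; move: hqi; clear; lia.
- move=> [|j] hj.
  + rewrite cnt_cons0 cert0 /m /= eq_sym.
    case: (eqVneq q 0) => [e|_] /=; last by rewrite subn0.
    by move: Mq; rewrite e /=; clear; lia.
  + rewrite cnt_consS cert0 (cnt_inv _ hcB hdB shl).
    have := cB j hj; rewrite /sh add1n => ->.
    rewrite /m /= eq_sym.
    case: (eqVneq q j.+1) => [e|_] /=; last by rewrite subn0.
    by move: Mq; rewrite e /=; clear; lia.
Qed.
Lemma main_ind :
  (forall t D, 0 < D -> INJ D (pre D t) /\ SURJ D (pre D t)) /\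
  (forall ts D, 0 < D -> INJ D (fpre D ts) /\ SURJ D (fpre D ts)).
Proof.
apply: ptree_ind2.
- by move=> D _; split; [exact: inj_nil | exact: surj_nil].
- move=> t ts Ht Hts D hD /=; have [I1 S1] := Ht D hD; have [I2 S2] := Hts D hD.
  split; [apply: inj_cat | apply: surj_cat] => //;
    by [apply: closed_pre | apply: closed_fpre | apply: deep_pre].
- move=> ts Hts D hD; rewrite preE2; have [I1 S1] := Hts D.+1 isT.
  split; [apply: inj_cons | apply: surj_cons] => //;
    by [apply: closed_fpre | apply: deep_fpre].
Qed.

Definition sh1 (p : nat * nat) := (p.1.+1, p.2).

Lemma pre_shift :
  (forall t d, pre d.+1 t = map sh1 (pre d t)) /\
  (forall ts d, fpre d.+1 ts = map sh1 (fpre d ts)).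
Proof.
apply: ptree_ind2 => //.
- by move=> t ts Ht Hts d /=; rewrite Ht Hts map_cat.
- by move=> ts Hts d; rewrite !preE Hts.
Qed.

Lemma sticky_equiv T l : is_sticky T l <-> stickyN (tnodes T) l.
Proof.
split.
- move=> [h1 [h2 h3]] u hu; split; first exact: h1.
  split; first exact: h2.
  by move=> v hv; apply: h3.
- move=> H; split; first by move=> u hu; have [] := H u hu.
  split; first by move=> u hu; have [_ []] := H u hu.
  by move=> u v hu; have [_ [_ h]] := H u hu; apply: h.
Qed.

Lemma tnodesE ts : tnodes (Node ts) = (0, (size (fpre 1 ts)).+1) :: fpre 1 ts.
Proof. by rewrite /tnodes preE2. Qed.

Lemma cc_eq ts l j :
  cert_count (Node ts) l j.+1 = cntN (fpre 1 ts) (sh l 1) j.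
Proof.
rewrite /cert_count /cntN /nnodes tnodesE /=.
have -> : iota 1 (size (fpre 1 ts)) = map (addn 1) (iota 0 (size (fpre 1 ts))).
  by rewrite -iotaDl.
rewrite count_map; apply: eq_count => u /=.
change ((certN (tnodes (Node ts)) l u.+1 == j.+1) = (certN (fpre 1 ts) (sh l 1) u == j)).
by rewrite tnodesE cert_consS eqSS.
Qed.
Import GRing.Theory Num.Theory.
Lemma int_sum0 a s (h : nat -> nat) :
  (\sum_(a <= w < a + s) ((h w)%:Z - 1) =
   (\sum_(a <= w < a + s) h w)%:Z - s%:Z)%R.
Proof.
elim: s => [|s IH]; first by rewrite addn0 !big_geq.
rewrite addnS !big_nat_recr ?leq_addr //= IH PoszD; lia.
Qed.

Lemma sum_shiftZ a i s (f : nat -> int) :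
  (\sum_(a + i <= w < a + i + s) f w = \sum_(i <= w < i + s) f (a + w))%R.
Proof.
rewrite (addnC a i) big_addn.
have -> : i + a + s - a = i + s by clear; lia.
by apply: eq_bigr => w _; rewrite addnC.
Qed.

Lemma term_le_sum n j (F : nat -> nat) : j < n -> F j <= \sum_(0 <= w < n) F w.
Proof.
elim: n => [//|n IH] hj; rewrite big_nat_recr //=.
case: (ltnP j n) => h; first by have := IH h; clear; lia.
have -> : j = n by move: h hj; clear; lia.
exact: leq_addl.
Qed.

Lemma pre_root D t : dp (pre D t) 0 = D /\ sz (pre D t) 0 = size (pre D t).
Proof. by case: t => ts; rewrite preE2. Qed.

Lemma pre_nonroot D t i : 0 < i -> i < size (pre D t) -> D < dp (pre D t) i.
Proof.
case: t => ts; rewrite preE2; case: i => [//|i] _ /= hi.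
by have := @deep_fpre D.+1 ts i hi; rewrite /dp.
Qed.

Lemma flow_total D ts (f : nat -> int) :
  (forall v, v < size (fpre D ts) -> dp (fpre D ts) v = D ->
     (\sum_(v <= w < v + sz (fpre D ts) v) f w = 0)%R) ->
  (\sum_(0 <= w < size (fpre D ts)) f w = 0)%R.
Proof.
elim: ts f => [|t ts IH] f H /=; first by rewrite big_geq.
rewrite size_cat (@big_cat_nat _ _ _ (size (pre D t))) ?leq_addr //=.
have [r1 r2] := pre_root D t.
have hpos : 0 < size (pre D t) by rewrite size_pre; case: t {r1 r2 H}.
have -> : (\sum_(0 <= i < size (pre D t)) f i = 0)%R.
  have := H 0; rewrite size_cat sz_catl // dp_catl // r1 r2 add0n; apply=> //.
  by move: hpos; clear; lia.
have e := sum_shiftZ (size (pre D t)) 0 (size (fpre D ts)) f.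
rewrite addn0 add0n in e; rewrite add0r e.
apply: (IH (fun w => f (size (pre D t) + w))) => v hv hd.
have := H (size (pre D t) + v); rewrite /= size_cat dp_catr sz_catr sum_shiftZ; apply=> //.
by move: hv; clear; lia.
Qed.

Lemma root_sum D ts l : 0 < D -> stickyN (fpre D ts) l ->
  forall i, i < size (fpre D ts) -> dp (fpre D ts) i = D ->
  \sum_(i <= w < i + sz (fpre D ts) i) cntN (fpre D ts) l w = sz (fpre D ts) i.
Proof.
move=> hD; elim: ts l => [|t ts IH] l //= /sticky_cat [sA sB] i.
set A := pre D t; set B := fpre D ts.
have hcA : closedN A := @closed_pre D t.
have hdA : deepN 1 A by apply: deep_weak (@deep_pre D t).
rewrite size_cat => hi; case: (ltnP i (size A)) => hiA hdp.
- have i0 : i = 0.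
    case: (posnP i) => // hp; have := pre_nonroot hp hiA.
    by rewrite -(dp_catl B hiA) hdp ltnn.
  have [r1 r2] := pre_root D t; rewrite -/A in r1 r2.
  rewrite i0 (sz_catl B); last by rewrite -i0.
  rewrite r2 add0n.
  transitivity (\sum_(0 <= w < size A) cntN A l w); last exact: total_cnt hcA hdA sA.
  apply: eq_big_nat => w hw; apply: cnt_catl => //; move: hw; clear; lia.
- rewrite -(subnKC hiA) sz_catr sum_shift.
  rewrite -(subnKC hiA) dp_catr in hdp.
  have hi' : i - size A < size B by move: hi hiA; clear; lia.
  rewrite -[RHS](IH _ sB _ hi' hdp).
  by apply: eq_big_nat => w hw; rewrite cnt_catr.
Qed.

Lemma nth_sh1_2 (s : NL) j : (nth (0,0) (map sh1 s) j).2 = (nth (0,0) s j).2.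
Proof.
case: (ltnP j (size s)) => h; first by rewrite (nth_map (0,0)).
by rewrite !nth_default ?size_map.
Qed.

Lemma nth_sh1_1 (s : NL) j : j < size s ->
  (nth (0,0) (map sh1 s) j).1 = (nth (0,0) s j).1.+1.
Proof. by move=> h; rewrite (nth_map (0,0)). Qed.
Theorem mainTheorem6 (T : ptree) (hT : 2 <= ptsize T) :
  (forall l, is_sticky T l -> is_closed_flow (children T) (sticky_to_flow T l)) /\
  (forall l1 l2, is_sticky T l1 -> is_sticky T l2 ->
     (forall j, j < fnnodes (children T) -> sticky_to_flow T l1 j = sticky_to_flow T l2 j) ->
     forall u, u < nnodes T -> l1 u = l2 u) /\
  (forall f, is_closed_flow (children T) f ->
     exists l, is_sticky T l /\
       forall j, j < fnnodes (children T) -> sticky_to_flow T l j = f j).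
Proof.
case: T hT => ts _ /=.
set N1 := fpre 1 ts.
have hc1 : closedN N1 := @closed_fpre 1 ts.
have hd1 : deepN 1 N1 := @deep_fpre 1 ts.
have [I1 S1] := main_ind.2 ts 1 isT.
have fn : fnodes ts = fpre 0 ts by rewrite fpreE.
have shN : N1 = map sh1 (fpre 0 ts) := pre_shift.2 ts 0.
have fsz : fnnodes ts = size N1 by rewrite /fnnodes fn shN size_map.
have fsub_eq : forall j, fsub ts j = sz N1 j.
  by move=> j; rewrite /fsub /sz fn shN nth_sh1_2.
have fdep_eq : forall j, j < size N1 -> fdepth ts j = 0 -> dp N1 j = 1.
  move=> j hj; rewrite /fdepth /dp fn shN nth_sh1_1; first by move=> ->.
  by move: hj; rewrite shN size_map.
have stf : forall l j, sticky_to_flow (Node ts) l j = ((cntN N1 (sh l 1) j)%:Z - 1)%R.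
  by move=> l j; rewrite /sticky_to_flow cc_eq.
have outE : forall l v, outrate ts (sticky_to_flow (Node ts) l) v =
    ((\sum_(v <= w < v + sz N1 v) cntN N1 (sh l 1) w)%:Z - (sz N1 v)%:Z)%R.
  move=> l v; rewrite /outrate fsub_eq -int_sum0.
  by apply: eq_bigr => w _; rewrite stf.
split.
  move=> l /sticky_equiv; rewrite tnodesE => /sticky_cons [_ sB].
  split.
  - move=> v; rewrite fsz => hv; split; first by rewrite stf; lia.
    rewrite outE; have := sub_cnt hc1 hd1 sB hv; lia.
  - move=> v; rewrite fsz => hv hdep; rewrite outE.
    by rewrite (@root_sum 1 ts (sh l 1) isT sB v hv (fdep_eq v hv hdep)) subrr.
split.
  move=> l1 l2 /sticky_equiv hs1 /sticky_equiv hs2 heq u.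
  rewrite tnodesE in hs1 hs2.
  move/sticky_cons: hs1 => [r1 s1]; move/sticky_cons: hs2 => [r2 s2].
  have H := I1 (sh l1 1) (sh l2 1) (fun _ => 0) (fun _ => 0) s1 s2
    (fun _ _ h => False_ind _ (notF h)) (fun _ _ h => False_ind _ (notF h)).
  have {}H : forall i, i < size N1 -> (sh l1 1 i = sh l2 1 i \/ sh l1 1 i < 1 /\ sh l2 1 i < 1).
    have hcnt : forall k, k < size N1 ->
        cntN N1 (sh l1 1) k + 0 = cntN N1 (sh l2 1) k + 0.
      by move=> k hk; have := heq k; rewrite fsz !stf => /(_ hk); lia.
    by move=> i hi; have [] := H hcnt i hi.
  rewrite /nnodes tnodesE /=.
  case: u => [|j] hj.
  - by have [c1 _] := r1; have [c2 _] := r2; move: c1 c2; rewrite dp_cons0; lia.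
  - by have := H j hj; rewrite /sh !add1n; lia.
move=> f [hflow hcl].
pose h j := `|(f j + 1)%R|%N.
have hh : forall j, j < size N1 -> ((h j)%:Z = f j + 1)%R.
  move=> j hj; have hj' : j < fnnodes ts by rewrite fsz.
  have [hj1 _] := hflow j hj'.
  rewrite /h; lia.
have hfl : forall i, i < size N1 -> sz N1 i <= \sum_(i <= w < i + sz N1 i) h w.
  move=> i hi; have hi' : i < fnnodes ts by rewrite fsz.
  have [_ ho] := hflow i hi'.
  move: ho; rewrite /outrate fsub_eq.
  have [_ [hcl' _]] := hc1 i hi.
  rewrite (@eq_big_nat _ _ _ _ _ _ (fun w => ((h w)%:Z - 1)%R)); last first.
    move=> w hw; rewrite hh; first by rewrite addrK.
    by move: hw hcl'; clear; lia.
  rewrite int_sum0; lia.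
have [g [m [sg [eg cg]]]] := S1 h hfl.
have totf : (\sum_(0 <= w < size N1) f w = 0)%R.
  have := @flow_total 0 ts f.
  have -> : size (fpre 0 ts) = size N1 by rewrite shN size_map.
  apply=> v hv hd; have := hcl v; rewrite /outrate fsz /fdepth /fsub fn; apply=> //.
have toth : \sum_(0 <= w < size N1) h w = size N1.
  have := int_sum0 0 (size N1) h; rewrite add0n.
  rewrite (@eq_big_nat _ _ _ _ _ _ (fun w => f w)); last first.
    by move=> w hw; rewrite hh ?addrK //; move: hw; clear; lia.
  rewrite totf; lia.
have totm : \sum_(0 <= w < size N1) m w = 0.
  have := total_cnt hc1 hd1 sg.
  have : \sum_(0 <= w < size N1) h w =
         \sum_(0 <= w < size N1) cntN N1 g w + \sum_(0 <= w < size N1) m w.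
    rewrite -big_split /=; apply: eq_big_nat => w hw; apply: cg.
    by move: hw; rewrite /N1; clear; lia.
  rewrite toth; lia.
exists (fun u => if u is j.+1 then g j else 0); split.
  apply/sticky_equiv; rewrite tnodesE; apply/sticky_cons; split; last exact: sg.
  split; first by [].
  split; first by rewrite dp_cons0.
  by move=> v _ _ w _ _; rewrite dp_cons0.
move=> j; rewrite fsz => hj; rewrite stf.
have -> : cntN N1 (sh (fun u => if u is j.+1 then g j else 0) 1) j = cntN N1 g j by [].
have hm : m j = 0.
  have := term_le_sum m hj; rewrite totm; clear; lia.
have := cg j hj; rewrite hm addn0 => <-.
have := hh j hj; lia.
Qed.
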